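(* Consider a single-antenna jammer ($I=1$) with a fixed (deterministic) transmit vector $\mathbf w_D\in\mathbb C^D$, so $\mathbf W_D=\mathbf w_D^{\mathrm T}$, and let $\mathbf S_D$ be uniformly distributed on $\mathcal S^{U\times D}$. Then the probability (over $\mathbf S_D$) that the jammer is eclipsed (with perfect CSI) is at most $$p_e(\mathbf w_D)=\begin{cases}1 & \text{if } \mathbf w_D=\mathbf 0,\\[2pt] 1-\Big(1-\dfrac{2^{\|\mathbf w_D\|_0}-1}{4^{\|\mathbf w_D\|_0-1}}\Big)^U & \text{otherwise,}\end{cases}$$ where $\|\mathbf w_D\|_0$ is the number of nonzero entries of $\mathbf w_D$.
   Context: Let $U,D$ be positive integers and $\mathcal S=\{(\pm1\pm i)/\sqrt2\}\subset\mathbb C$ (QPSK). Eclipsing with perfect CSI (single-antenna case): given $\mathbf S_D\in\mathcal S^{U\times D}$ and $\mathbf w_D\in\mathbb C^D$, the jammer is eclipsed if there exists $\tilde{\mathbf S}_D\in\mathcal S^{U\times D}\setminus\{\mathbf S_D\}$ such that the $(U+1)\times D$ matrix $\begin{bmatrix}\mathbf S_D-\tilde{\mathbf S}_D\\ \mathbf w_D^{\mathrm T}\end{bmatrix}$ has rank at most $1$. *)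

(* Defs.v *)
From HB Require Import structures.
From mathcomp Require Import all_boot all_order all_algebra.
From mathcomp Require Import reals complex.
Set Implicit Arguments. Unset Strict Implicit. Unset Printing Implicit Defensive.
Import Order.TTheory GRing.Theory Num.Theory.
Local Open Scope ring_scope.

(* A QPSK symbol is indexed by its pair of signs (b1, b2) : bool * bool,
   with true ↦ +1, false ↦ -1; its value is (±1 ± i)/√2 in C = R[i]. *)
Definition sgnb {R : realType} (b : bool) : R := if b then 1 else -1.

Definition qpsk {R : realType} (s : bool * bool) : R[i] :=
  Complex (sgnb s.1 / Num.sqrt (2 : R)) (sgnb s.2 / Num.sqrt (2 : R)).

Definition symb_mx {R : realType} (U D : nat) (S : 'M[bool * bool]_(U, D))
  : 'M[R[i]]_(U, D) := map_mx qpsk S.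

(* Eclipsing with perfect CSI (single antenna): exists S~ <> S with
   rank [S - S~ ; w^T] <= 1.  w : 'rV_D plays the role of w_D^T. *)
Definition eclipsed {R : realType} (U D : nat)
  (S : 'M[bool * bool]_(U, D)) (w : 'rV[R[i]]_D) : bool :=
  [exists St : 'M[bool * bool]_(U, D),
     (St != S) && (\rank (col_mx (symb_mx S - symb_mx St) w) <= 1)%N].

Definition prob_eclipsed {R : realType} (U D : nat) (w : 'rV[R[i]]_D) : R :=
  (#|[set S : 'M[bool * bool]_(U, D) | eclipsed S w]|)%:R
  / (#|{: 'M[bool * bool]_(U, D)}|)%:R.

Definition l0norm {C : nzRingType} (D : nat) (w : 'rV[C]_D) : nat :=
  #|[set j : 'I_D | w 0 j != 0]|.

Definition p_e {R : realType} (U D : nat) (w : 'rV[R[i]]_D) : R :=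
  if w == 0 then 1
  else let k := l0norm w in
       1 - (1 - ((2 ^ k)%:R - 1) / (4 ^ (k - 1))%:R) ^+ U.

(* Main.v *)
Require Import Defs.
From HB Require Import structures.
From mathcomp Require Import all_boot all_order all_algebra.
From mathcomp Require Import reals complex.
From mathcomp Require Import ring lra zify.
From Stdlib Require Import FunctionalExtensionality.
Import Order.TTheory GRing.Theory Num.Theory.
Local Open Scope ring_scope.

Lemma card_bij (A B : finType) (f : A -> B) (g : B -> A) (P : pred A) :
  cancel f g -> cancel g f ->
  #|[set x | P x]| = #|[set y | P (g y)]|.
Proof.
move=> fK gK; rewrite -(card_imset _ (can_inj fK)) (can2_imset_pre _ fK gK).
by apply: eq_card => y; rewrite !inE.
Qed.

Lemma card_ffam (T : finType) D (F : 'I_D -> pred T) :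
  #|[set f : {ffun 'I_D -> T} | [forall j, F j (f j)]]| = (\prod_j #|F j|)%N.
Proof.
have -> : (\prod_j #|F j|)%N = #|family F|.
  by rewrite card_family foldrE big_map big_enum.
apply: eq_card => f; rewrite inE; apply/forallP/familyP => //.
Qed.

Lemma card_rowfam (T : finType) D (F : 'I_D -> pred T) :
  #|[set r : 'rV[T]_D | [forall j, F j (r 0 j)]]| = (\prod_j #|F j|)%N.
Proof.
rewrite (@card_bij _ _ (fun r : 'rV[T]_D => [ffun j => r 0 j])
   (fun f : {ffun 'I_D -> T} => \row_j f j)); last first.
- by move=> f; apply/ffunP => j; rewrite ffunE mxE.
- by move=> r; apply/rowP => j; rewrite mxE ffunE.
rewrite -card_ffam; apply: eq_card => f; rewrite !inE.
by apply: eq_forallb => j; rewrite mxE.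
Qed.

Lemma card_rows (T : finType) U D (A : {set 'rV[T]_D}) :
  #|[set S : 'M[T]_(U, D) | [forall u, row u S \in A]]| = (#|A| ^ U)%N.
Proof.
rewrite (@card_bij _ _ (fun S : 'M[T]_(U,D) => [ffun u => row u S])
   (fun f : {ffun 'I_U -> 'rV[T]_D} => \matrix_u f u)); last first.
- by move=> f; apply/ffunP => u; rewrite ffunE rowK.
- by move=> S; apply/matrixP => i j; rewrite !mxE ffunE mxE.
rewrite -[in RHS](card_ord U) -card_ffun_on; apply: eq_card => f; rewrite !inE.
apply/forallP/ffun_onP => H u; move: (H u); by rewrite rowK.
Qed.

Definition sg {T : pzRingType} (b : bool) : T := if b then 1 else -1.
Definition okc {T : pzRingType} (p : T) (b : bool) : bool := (p == 0) || (p == sg b).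
Definition del {T : pzRingType} (m s : bool) : T := if m then sg s else 0.
Definition pm {T : pzRingType} (m s : bool * bool) (a b : T) (x : bool * bool) : bool :=
  okc (del m.1 s.1 * a - del m.2 s.2 * b) x.1 &&
  okc (del m.1 s.1 * b + del m.2 s.2 * a) x.2.

Section R.
Variable R : realType.

Lemma okc_of (x1 y1 : bool) (p : R) : sg x1 - sg y1 = 2 * p -> okc p x1.
Proof.
rewrite /okc /sg; case: x1; case: y1 => /= h; apply/orP;
  [left|right|right|left]; apply/eqP; lra.
Qed.

Lemma sg_del (s1 t1 : bool) : sg s1 - sg t1 = 2 * (del (s1 != t1) s1 : R).
Proof. by rewrite /del /sg; case: s1; case: t1 => /=; lra. Qed.

Lemma sqrt2_gt0 : 0 < Num.sqrt (2 : R).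
Proof. by rewrite sqrtr_gt0 ltr0n. Qed.

Lemma div_lin (g X Y A B C E a b : R) : g != 0 ->
  X / g - Y / g = (A / g - B / g) * a - (C / g - E / g) * b ->
  X - Y = (A - B) * a - (C - E) * b.
Proof.
move=> g0 h.
have h' : (X - Y) / g = ((A - B) * a - (C - E) * b) / g.
  by rewrite mulrBl h; field.
by move/(congr1 ( *%R^~ g)): h'; rewrite !divfK.
Qed.

Lemma div_lin2 (g X Y A B C E a b : R) : g != 0 ->
  X / g - Y / g = (A / g - B / g) * b + (C / g - E / g) * a ->
  X - Y = (A - B) * b + (C - E) * a.
Proof.
move=> g0 h.
have h' : (X - Y) / g = ((A - B) * b + (C - E) * a) / g.
  by rewrite mulrBl h; field.
by move/(congr1 ( *%R^~ g)): h'; rewrite !divfK.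
Qed.

Lemma key_pm (s s' x x' : bool * bool) (rho : R[i]) :
  qpsk x - qpsk x' = (qpsk s - qpsk s') * rho ->
  pm (s.1 != s'.1, s.2 != s'.2) s (complex.Re rho) (complex.Im rho) x.
Proof.
case: rho => a b /=.
case: s s' x x' => [s1 s2] [t1 t2] [x1 x2] [y1 y2] /= H.
have g0 : Num.sqrt (2 : R) != 0 by rewrite gt_eqF // sqrt2_gt0.
have hR := congr1 (@complex.Re R) H; have hI := congr1 (@complex.Im R) H.
move: hR hI => /= /(@div_lin _ _ _ _ _ _ _ _ _ g0) hR /(@div_lin2 _ _ _ _ _ _ _ _ _ g0) hI.
rewrite /pm /=; apply/andP; split.
- apply: (okc_of _ y1).
  move: hR; rewrite -[sgnb _]/(sg _) -[sgnb y1]/(sg _) -[sgnb s1]/(sg _) -[sgnb t1]/(sg _).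
  rewrite -[sgnb s2]/(sg _) -[sgnb t2]/(sg _) => ->; rewrite !sg_del; ring.
- apply: (okc_of _ y2).
  move: hI; rewrite -[sgnb _]/(sg _) -[sgnb y2]/(sg _) -[sgnb s1]/(sg _) -[sgnb t1]/(sg _).
  rewrite -[sgnb s2]/(sg _) -[sgnb t2]/(sg _) => ->; rewrite !sg_del; ring.
Qed.
End R.
Section R3.
Variable R : realType.
Local Notation Q := (bool * bool)%type.
Lemma sgI {b c : bool} : (sg b : R) = sg c -> b = c.
Proof. by case: b; case: c => //=; rewrite /sg => h; lra. Qed.

Lemma card_okc (p q : R) : (p != 0) || (q != 0) ->
  (#|[pred x : Q | okc p x.1 && okc q x.2]| <= 2)%N.
Proof.
case/orP => nz.
  have inj : {in [pred x : Q | okc p x.1 && okc q x.2] &, injective snd}.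
    move=> [x1 x2] [y1 y2]; rewrite !inE /= /okc (negbTE nz) /=.
    by move=> /andP[/eqP h1 _] /andP[/eqP h2 _] /= e; rewrite e (sgI (etrans (esym h1) h2)).
  rewrite -(card_in_imset inj).
  apply: leq_trans (max_card _) _.
  by rewrite card_bool.
have inj : {in [pred x : Q | okc p x.1 && okc q x.2] &, injective fst}.
  move=> [x1 x2] [y1 y2]; rewrite !inE /= /okc (negbTE nz) /=.
  by move=> /andP[_ /eqP h1] /andP[_ /eqP h2] /= e; rewrite e (sgI (etrans (esym h1) h2)).
rewrite -(card_in_imset inj).
apply: leq_trans (max_card _) _.
by rewrite card_bool.
Qed.

Lemma card_pm m s (a b : R) : m != (false, false) -> (a != 0) || (b != 0) ->
  (#|pm m s a b| <= 2)%N.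
Proof.
move=> nm nab.
have H : ((del m.1 s.1 * a - del m.2 s.2 * b) != 0) || ((del m.1 s.1 * b + del m.2 s.2 * a) != 0).
  apply/negPn/negP; rewrite negb_or !negbK => /andP[/eqP h1 /eqP h2].
  move: nab.
  suff [-> ->] : a = 0 /\ b = 0 by rewrite eqxx.
  by move: nm h1 h2; case: m => [[] []] //=; case: s => [[] []];
    rewrite /del /sg /= => _ h1 h2; split; lra.
have := card_okc _ _ H.
by apply: leq_trans; apply: subset_leq_card; apply/subsetP => x.
Qed.

Lemma qpsk_inj : injective (@qpsk R).
Proof.
have g0 : Num.sqrt (2 : R) != 0 by rewrite gt_eqF // sqrt2_gt0.
have sI : forall b c : bool, sgnb b / Num.sqrt 2 = sgnb c / Num.sqrt (2 : R) -> b = c.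
  move=> b c /(congr1 ( *%R^~ (Num.sqrt 2))); rewrite !divfK //.
  by case: b; case: c; rewrite /sgnb //= => h; lra.
move=> [x1 x2] [y1 y2] h.
have h1 := congr1 (@complex.Re R) h; have h2 := congr1 (@complex.Im R) h.
by rewrite /= in h1 h2; rewrite (sI _ _ h1) (sI _ _ h2).
Qed.
End R3.

Definition Ka {T : pzRingType} (s : bool * bool) (a b : T) : bool :=
  [forall x, ~~ pm (true, false) s a b x && ~~ pm (false, true) s a b x].
Definition Kb {T : pzRingType} (s : bool * bool) (a b : T) : bool :=
  [forall x, [forall y, pm (true, false) s a b x ==> pm (true, false) s a b y ==> (x == y)]]
  && [forall x, [forall y, pm (false, true) s a b x ==> pm (false, true) s a b y ==> (x == y)]]
  && [forall x, ~~ pm (true, true) s a b x].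
Definition Kc {T : pzRingType} (s : bool * bool) (a b : T) : bool :=
  [forall x, pm (true, true) s a b x ==> pm (true, false) s a b x && pm (false, true) s a b x]
  && [exists x, pm (true, false) s a b x && pm (false, true) s a b x].

Ltac allx := apply/forallP => -[[] []].
Ltac solveKb := rewrite /Kb; apply/andP; split; [apply/andP; split|];
  [allx; allx; vm_compute; reflexivity | allx; allx; vm_compute; reflexivity
  | allx; vm_compute; reflexivity].
Ltac solveKc := rewrite /Kc; apply/andP; split;
  [allx; vm_compute; reflexivity
  | apply/existsP; first [exists (true, true); vm_compute; reflexivity
                         | exists (true, false); vm_compute; reflexivity
                         | exists (false, true); vm_compute; reflexivity
                         | exists (false, false); vm_compute; reflexivity]].

Lemma int_cases (s : bool * bool) (ia ib : int) :
  ia \in [:: -1; 0; 1] -> ib \in [:: -1; 0; 1] -> (ia, ib) != (0, 0) ->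
  Kb s ia ib || Kc s ia ib.
Proof.
rewrite !inE => /or3P[] /eqP-> /or3P[] /eqP-> // _; case: s => [[] []];
  first [apply/orP; left; solveKb | apply/orP; right; solveKc].
Qed.

Section Abstract.
Local Notation Q := (bool * bool)%type.
Variables (D : nat) (j0 : 'I_D) (z : pred 'I_D) (s : Q) (P : nat -> 'I_D -> pred Q).
Hypothesis zj0 : ~~ z j0.

Definition Jr j := (j != j0) && ~~ z j.
Definition FF m j : pred Q := fun x => if j == j0 then x == s else z j || P m j x.
Definition BB m := [set r : 'rV[Q]_D | [forall j, FF m j (r 0 j)]].
Definition gg j : nat := if j == j0 then 1%N else if z j then 4%N else 2%N.
Definition hh j : nat := if z j then 4%N else 1%N.

Definition Ka' j := [forall x, ~~ P 1 j x && ~~ P 2 j x].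
Definition Kb' j := [&& #|P 1 j| <= 1, #|P 2 j| <= 1 & [forall x, ~~ P 3 j x]]%N.
Definition Kc' j := [forall x, P 3 j x ==> P 1 j x && P 2 j x] && [exists x, P 1 j x && P 2 j x].

Hypothesis Pcard : forall m j, Jr j -> (#|P m j| <= 2)%N.
Hypothesis Ptri : forall j, Jr j -> [|| Ka' j, Kb' j | Kc' j].

Lemma cardQ : #|{: Q}| = 4%N.
Proof. by rewrite card_prod card_bool. Qed.

Lemma card_FF m j : (#|FF m j| <= gg j)%N.
Proof.
rewrite /gg; case: eqP => [->|/eqP nj].
  rewrite (eq_card (B := pred1 s)) ?card1 // => x; by rewrite /FF eqxx.
case: ifP => zj.
  by rewrite -cardQ; apply: max_card.
rewrite (eq_card (B := P m j)); first by apply: Pcard; rewrite /Jr nj zj.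
by move=> x; rewrite /FF (negbTE nj) zj.
Qed.

Lemma card_BB m : (#|BB m| = \prod_j #|FF m j|)%N.
Proof. by rewrite /BB card_rowfam. Qed.

Lemma hh_gg j : (hh j <= gg j)%N.
Proof. by rewrite /hh /gg; case: eqP => [->|]; rewrite ?(negbTE zj0) //; case: (z j). Qed.

Lemma HG : (\prod_j hh j <= \prod_j gg j)%N.
Proof. by apply: leq_prod => j _; apply: hh_gg. Qed.

Lemma BB_le m : (#|BB m| <= \prod_j gg j)%N.
Proof. by rewrite card_BB; apply: leq_prod => j _; apply: card_FF. Qed.

Lemma main_abstract :
  (#|BB 1 :|: BB 2 :|: BB 3| <= 2 * \prod_j gg j - \prod_j hh j)%N.
Proof.
set G := (\prod_j gg j)%N; set H := (\prod_j hh j)%N.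
have HG' : (H <= G)%N := HG.
have GG : (G <= 2 * G - H)%N by lia.
case: (boolP [exists j, Jr j && Ka' j]) => [/existsP[j1 /andP[J1 K1]]|nA].
  apply: leq_trans GG; apply: leq_trans (BB_le 3); apply: subset_leq_card.
  apply/subsetP => r; rewrite !inE -orbA => /or3P[] //.
  - move/forallP/(_ j1); move/forallP: K1 => /(_ (r 0 j1)) /andP[/negbTE n1 _].
    by move: J1; rewrite /FF /Jr => /andP[/negbTE -> /negbTE ->]; rewrite n1.
  - move/forallP/(_ j1); move/forallP: K1 => /(_ (r 0 j1)) /andP[_ /negbTE n1].
    by move: J1; rewrite /FF /Jr => /andP[/negbTE -> /negbTE ->]; rewrite n1.
case: (boolP [exists j, Jr j && Kb' j]) => [/existsP[j1 /andP[J1 K1]]|nB].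
  move: K1 => /and3P[c1 c2 /forallP n3].
  set g' := fun j => if j == j1 then 1%N else gg j.
  have Gg : G = (2 * \prod_j g' j)%N.
    rewrite /G (bigD1 j1) //= [X in _ = (2 * X)%N](bigD1 j1) //= /g' eqxx mul1n.
    move: J1; rewrite /Jr /gg => /andP[/negbTE -> /negbTE ->]; congr (_ * _)%N.
    by apply: eq_bigr => j /negbTE ->.
  have Bm : forall m, (#|P m j1| <= 1)%N -> (#|BB m| <= \prod_j g' j)%N.
    move=> m cm; rewrite card_BB; apply: leq_prod => j _; rewrite /g'.
    case: eqP => [->|_]; last exact: card_FF.
    rewrite (eq_card (B := P m j1)) // => x.
    by move: J1; rewrite /FF /Jr => /andP[/negbTE -> /negbTE ->].
  apply: leq_trans GG; rewrite Gg mul2n -addnn.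
  have -> : BB 3 = set0.
    apply/setP => r; rewrite !inE; apply/negbTE/negP => /forallP/(_ j1).
    move: J1; rewrite /FF /Jr => /andP[/negbTE -> /negbTE ->] /=.
    by rewrite (negbTE (n3 _)).
  rewrite setU0; apply: leq_trans (leq_card_setU _ _) _.
  by rewrite leq_add ?Bm.
have allC : forall j, Jr j -> Kc' j.
  move=> j J; case/or3P: (Ptri j J) => // K.
  - by case/negP: nA; apply/existsP; exists j; rewrite J.
  - by case/negP: nB; apply/existsP; exists j; rewrite J.
have -> : BB 1 :|: BB 2 :|: BB 3 = BB 1 :|: BB 2.
  apply/setP => r; rewrite !inE; apply/idP/idP; last by case/orP => ->; rewrite ?orbT.
  case/orP => [//|/forallP h3]; apply/orP; left; apply/forallP => j.
  move: (h3 j); rewrite /FF; case: eqP => // /eqP nj; case: (boolP (z j)) => //= zj.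
  move=> h3j; have := allC j; rewrite /Jr nj zj => /(_ isT) /andP[/forallP/(_ (r 0 j)) hi _].
  by move: (implyP hi h3j) => /andP[].
rewrite cardsU; apply: leq_sub; first by rewrite mul2n -addnn leq_add ?BB_le.
have -> : BB 1 :&: BB 2 = [set r : 'rV[Q]_D | [forall j, (fun x => FF 1 j x && FF 2 j x) (r 0 j)]].
  apply/setP => r; rewrite !inE; apply/andP/forallP => [[/forallP h1 /forallP h2] j|h].
    by rewrite h1 h2.
  by split; apply/forallP => j; case/andP: (h j).
rewrite (@card_rowfam _ _ (fun j x => FF 1 j x && FF 2 j x)); apply: leq_prod => j _; rewrite /hh.
case: (boolP (z j)) => zj.
  rewrite (eq_card (B := predT)) ?cardQ // => x.
  rewrite /FF zj /=; case: eqP => // ej; by move: zj; rewrite ej (negbTE zj0).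
case: (j =P j0) => [->|/eqP nj].
  by apply/card_gt0P; exists s; rewrite /in_mem /= /FF !eqxx.
have := allC j; rewrite /Jr nj zj => /(_ isT) /andP[_ /existsP[x hx]].
by apply/card_gt0P; exists x; rewrite /in_mem /= /FF (negbTE nj) (negbTE zj).
Qed.

End Abstract.

Section R2.
Variable R : realType.
Local Notation Q := (bool * bool)%type.

Lemma sg_int (b : bool) : (sg b : R) = (sg b : int)%:~R.
Proof. by case: b; rewrite /sg ?rmorphN rmorph1. Qed.

Lemma del_int (m b : bool) : (del m b : R) = (del m b : int)%:~R.
Proof. by case: m; rewrite /del ?sg_int // rmorph0. Qed.

Lemma okc_int (p : int) (b : bool) : okc (p%:~R : R) b = okc p b.
Proof. by rewrite /okc intr_eq0 sg_int eqr_int. Qed.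

Lemma pm_int m s (ia ib : int) : pm m s (ia%:~R : R) (ib%:~R) = pm m s ia ib.
Proof.
apply: functional_extensionality => x.
by rewrite /pm !del_int -!intrM -intrB -intrD !okc_int.
Qed.

Lemma in3 (t : R) : t = -1 \/ t = 0 \/ t = 1 -> t \in [:: -1; 0; 1].
Proof. by case=> [->|[->|->]]; rewrite !inE eqxx ?orbT. Qed.

Lemma okc_in {t : R} {c x : bool} : okc (sg c * t) x -> t \in [:: -1; 0; 1].
Proof.
rewrite /okc /sg; case: c; case: x => /orP[] /eqP h; apply: in3; 
  first [left; lra | right; left; lra | right; right; lra].
Qed.

Lemma okc_inN {t : R} {c x : bool} : okc (- (sg c * t)) x -> t \in [:: -1; 0; 1].
Proof.
rewrite /okc /sg; case: c; case: x => /orP[] /eqP h; apply: in3;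
  first [left; lra | right; left; lra | right; right; lra].
Qed.

Lemma Ka_of s (a b : R) : (a \notin [:: -1; 0; 1]) || (b \notin [:: -1; 0; 1]) -> Ka s a b.
Proof.
move=> hab; apply/forallP => x; rewrite /pm /del /=.
rewrite !mul0r ?subr0 ?addr0 ?add0r ?sub0r.
apply/andP; split; apply/negP => /andP[h1 h2]; move: hab.
- by rewrite (okc_in h1) (okc_in h2).
- by rewrite (okc_in h2) (okc_inN h1).
Qed.

Lemma S3_int (a : R) : a \in [:: -1; 0; 1] -> exists2 ia : int, ia \in [:: -1; 0; 1] & a = ia%:~R.
Proof.
rewrite !inE => /or3P[] /eqP ->.
- by exists (-1); rewrite ?inE ?rmorphN ?rmorph1.
- by exists 0; rewrite ?inE ?rmorph0.
- by exists 1; rewrite ?inE ?rmorph1.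
Qed.

Lemma tri s (a b : R) : (a != 0) || (b != 0) -> [|| Ka s a b, Kb s a b | Kc s a b].
Proof.
move=> hab.
case: (boolP ((a \notin [:: -1; 0; 1]) || (b \notin [:: -1; 0; 1]))) => [h|].
  by rewrite Ka_of.
rewrite negb_or !negbK => /andP[/S3_int[ia ha ea] /S3_int[ib hb eb]]; rewrite ea eb in hab *.
have nz : (ia, ib) != (0, 0).
  by move: hab; rewrite !intr_eq0 xpair_eqE; case: (ia == 0); case: (ib == 0).
have eKb : Kb s (ia%:~R : R) (ib%:~R) = Kb s ia ib by rewrite /Kb !pm_int.
have eKc : Kc s (ia%:~R : R) (ib%:~R) = Kc s ia ib by rewrite /Kc !pm_int.
by rewrite eKb eKc (int_cases s ia ib ha hb nz) orbT.
Qed.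
End R2.

Lemma rank_col_row (F : fieldType) m n (E : 'M[F]_(m, n)) (w : 'rV[F]_n) :
  w != 0 -> (\rank (col_mx E w) <= 1)%N ->
  exists c : 'M[F]_(m, 1), forall u j, E u j = c u 0 * w 0 j.
Proof.
move=> w0 r1.
have sw : (w <= col_mx E w)%MS by rewrite -addsmxE addsmxSr.
have := mxrank_leqif_sup sw; rewrite rank_rV w0 => -[_ /esym].
have -> : (1 == \rank (col_mx E w))%N.
  have := mxrankS sw; rewrite rank_rV w0 => h.
  by rewrite eqn_leq r1 h.
rewrite col_mx_sub => /andP[/submxP[c ->] _].
by exists c => u j; rewrite mxE big_ord1.
Qed.

Lemma card_bigcup_le (T I : finType) (A : I -> {set T}) :
  (#|\bigcup_i A i| <= \sum_i #|A i|)%N.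
Proof.
apply: (big_rec2 (fun (X : {set T}) n => #|X| <= n)%N); first by rewrite cards0.
move=> i X n _ IH; apply: leq_trans (leq_card_setU _ _) _; by rewrite leq_add2l.
Qed.

Section Main.
Variables (R : realType) (U D : nat) (w : 'rV[R[i]]_D) (j0 : 'I_D).
Hypothesis wj0 : w 0 j0 != 0.
Local Notation Q := (bool * bool)%type.

Definition mk (m : nat) : Q :=
  if m == 1%N then (true, false) else if m == 2%N then (false, true) else (true, true).
Definition rho j := w 0 j / w 0 j0.
Definition zc : pred 'I_D := fun j => w 0 j == 0.
Definition Pc (s : Q) : nat -> 'I_D -> pred Q :=
  fun m j => pm (mk m) s (complex.Re (rho j)) (complex.Im (rho j)).
Definition Us s := BB D j0 zc s (Pc s) 1 :|: BB D j0 zc s (Pc s) 2 :|: BB D j0 zc s (Pc s) 3.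
Definition Bad := \bigcup_(s : Q) Us s.

Lemma rho_nz j : w 0 j != 0 -> (complex.Re (rho j) != 0) || (complex.Im (rho j) != 0).
Proof.
move=> wj; have : rho j != 0 by rewrite /rho mulf_neq0 ?invr_neq0.
by case: (rho j) => a b; rewrite eq_complex /= negb_and.
Qed.

Lemma Us_card s : (#|Us s| <= 2 * \prod_j gg D j0 zc j - \prod_j hh D zc j)%N.
Proof.
apply: main_abstract.
- by rewrite /zc.
- move=> m j /andP[_ nz]; apply: card_pm; first by rewrite /mk; case: (m == 1%N); case: (m == 2%N).
  exact: rho_nz.
- move=> j /andP[_ nz]; case/or3P: (@tri R s _ _ (rho_nz j nz)) => K.
  + by apply/orP; left; exact: K.
  + apply/orP; right; apply/orP; left; move: K => /andP[/andP[/forallP h1 /forallP h2] h3].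
    apply/and3P; split; last exact: h3; apply/card_le1_eqP => x y hx hy.
    * by apply/esym/eqP; move/forallP: (h1 x) => /(_ y) /implyP /(_ hx) /implyP /(_ hy).
    * by apply/esym/eqP; move/forallP: (h2 x) => /(_ y) /implyP /(_ hx) /implyP /(_ hy).
  + by apply/orP; right; apply/orP; right; exact: K.
Qed.

Lemma Bad_card : (#|Bad| <= 4 * (2 * \prod_j gg D j0 zc j - \prod_j hh D zc j))%N.
Proof.
rewrite /Bad; apply: leq_trans (card_bigcup_le _ _ Us) _.
set M := (2 * _ - _)%N.
apply: (@leq_trans (\sum_(s : Q) M)); first by apply: leq_sum => s _; exact: Us_card.
rewrite big_const card_prod card_bool /=; lia.
Qed.

Lemma ecl_bad (S : 'M[Q]_(U, D)) : eclipsed S w -> exists u, row u S \in Bad.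
Proof.
case/existsP => St /andP[nSt rk].
have w0 : w != 0 by apply/eqP => e; move: wj0; rewrite e mxE eqxx.
have [c hc] := @rank_col_row _ _ _ _ _ w0 rk.
have E : forall u j, qpsk (S u j) - qpsk (St u j) = c u 0 * w 0 j.
  by move=> u j; rewrite -hc !mxE.
have [[u j1] /= n1] : exists p : 'I_U * 'I_D, St p.1 p.2 != S p.1 p.2.
  case: (pickP (fun p : 'I_U * 'I_D => St p.1 p.2 != S p.1 p.2)) => [p h|h].
    by exists p.
  case/negP: nSt; apply/eqP/matrixP => i j.
  by move: (h (i, j)) => /= /negbFE /eqP.
exists u; apply/bigcupP; exists (S u j0) => //.
set x0 := S u j0; set x0' := St u j0.
have cw : c u 0 = (qpsk x0 - qpsk x0') / w 0 j0 by rewrite E mulfK.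
have key : forall j, qpsk (S u j) - qpsk (St u j) = (qpsk x0 - qpsk x0') * rho j.
  by move=> j; rewrite E cw /rho mulrAC mulrA.
set m := (x0.1 != x0'.1, x0.2 != x0'.2).
have hm : forall j, pm m x0 (complex.Re (rho j)) (complex.Im (rho j)) (S u j).
  by move=> j; apply: key_pm; apply: key.
have nm : m != (false, false).
  apply/negP => /eqP em.
  have ex : x0 = x0'.
    move: em; rewrite /m; case: (x0) (x0') => [a1 a2] [b1 b2] /= [] /eqP e1 /eqP e2.
    by rewrite e1 e2.
  move: (E u j1); rewrite cw ex subrr mul0r mul0r => /eqP; rewrite subr_eq0 => /eqP.
  by move/qpsk_inj => e; move: n1; rewrite e eqxx.
have inBB : forall mm, mk mm = m -> row u S \in BB D j0 zc x0 (Pc x0) mm.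
  move=> mm emm; rewrite inE; apply/forallP => j; rewrite /FF mxE.
  case: eqP => [->|_]; first by rewrite eqxx.
  by rewrite /Pc emm hm orbT.
rewrite /Us !in_setU.
move: nm (inBB 1%N) (inBB 2%N) (inBB 3%N); rewrite /mk /=.
clear hm inBB; clearbody m; case: m => [[] []] //= _ h1 h2 h3.
- by rewrite (h3 erefl) !orbT.
- by rewrite (h1 erefl).
- by rewrite (h2 erefl) orbT.
Qed.
End Main.

Lemma nat_final k z b : (0 < k)%N ->
  (b <= 4 * (2 * (2 ^ (k - 1) * 4 ^ z) - 4 ^ z))%N ->
  (b * 4 ^ (k - 1) <= (2 ^ k - 1) * 4 ^ (k + z))%N.
Proof.
case: k => // k _; have e1 : (k.+1 - 1 = k)%N by lia.
rewrite e1 expnS expnD expnS.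
have X1 : (0 < 2 ^ k)%N by rewrite expn_gt0.
move: (2 ^ k)%N (4 ^ k)%N (4 ^ z)%N X1 => X Z Y X1 hb.
have e : (2 * (X * Y) - Y = (2 * X - 1) * Y)%N by rewrite mulnBl mul1n mulnA.
rewrite e in hb; move: (2 * X - 1)%N hb => T hb.
apply: leq_trans (leq_mul hb (leqnn Z)) _.
nia.
Qed.

Lemma nat_q k : (0 < k)%N -> (2 ^ k - 1 <= 4 ^ (k - 1))%N.
Proof.
case: k => // k _; have e1 : (k.+1 - 1 = k)%N by lia.
rewrite e1 expnS.
have -> : (4 ^ k = 2 ^ k * 2 ^ k)%N by rewrite -expnMn.
have X1 : (0 < 2 ^ k)%N by rewrite expn_gt0.
move: (2 ^ k)%N X1 => X X1; nia.
Qed.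

Lemma prod_hh D (z : pred 'I_D) : (\prod_j hh D z j = 4 ^ #|[set j | z j]|)%N.
Proof.
rewrite /hh -big_mkcond /= -prod_nat_const; apply: eq_bigl => j; by rewrite inE.
Qed.

Lemma prod_gg D j0 (z : pred 'I_D) : ~~ z j0 ->
  (\prod_j gg D j0 z j = 2 ^ (#|[set j | ~~ z j]| - 1) * 4 ^ #|[set j | z j]|)%N.
Proof.
move=> zj0; rewrite (bigD1 j0) //= {1}/gg eqxx mul1n (bigID z) /= mulnC.
congr (_ * _)%N.
- rewrite (cardsD1 j0 [set j | ~~ z j]) inE zj0 add1n subn1 /= -prod_nat_const.
  apply: eq_big => j; first by rewrite !inE.
  by move=> /andP[/negbTE nj /negbTE zj]; rewrite /gg nj zj.
- rewrite -prod_nat_const; apply: eq_big => j.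
    rewrite inE; case: eqP => [->|]; by rewrite ?(negbTE zj0).
  by move=> /andP[/negbTE nj zj]; rewrite /gg nj zj.
Qed.

Theorem theorem2 (R : realType) (U D : nat) (hU : (0 < U)%N) (hD : (0 < D)%N)
  (w : 'rV[R[i]]_D) :
  prob_eclipsed U w <= p_e U w.
Proof.
have All : #|{: 'M[bool * bool]_(U, D)}| = (4 ^ (U * D))%N by rewrite card_mx cardQ.
have Nr : #|{: 'rV[bool * bool]_D}| = (4 ^ D)%N by rewrite card_mx cardQ mul1n.
rewrite /prob_eclipsed All /p_e.
case: eqP => [_|/eqP w0].
  rewrite ler_pdivrMr ?ltr0n ?expn_gt0 // mul1r ler_nat -All; exact: max_card.
have [j0 wj0] : exists j0, w 0 j0 != 0.
  case: (pickP (fun j => w 0 j != 0)) => [j h|h]; first by exists j.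
  case/eqP: w0; apply/rowP => j; rewrite mxE; by move: (h j) => /negbFE/eqP.
set k := l0norm w.
set z := #|[set j | w 0 j == 0]|.
have Dkz : D = (k + z)%N.
  transitivity #|'I_D|; first by rewrite card_ord.
  rewrite /k /l0norm /z -(cardsC [set j | w 0 j != 0]); congr (_ + _)%N.
  by apply: eq_card => j; rewrite !inE negbK.
have k1 : (0 < k)%N by apply/card_gt0P; exists j0; rewrite inE.
set b := #|Bad R D w j0|.
have hb : (b <= 4 * (2 * (2 ^ (k - 1) * 4 ^ z) - 4 ^ z))%N.
  have := Bad_card R D w j0 wj0; rewrite prod_gg ?prod_hh //.
have hbn := nat_final k z b k1 hb; rewrite -Dkz in hbn.
have hbN : (b <= 4 ^ D)%N by rewrite -Nr; exact: max_card.
set E := [set S | eclipsed S w].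
set Good := [set S : 'M[bool * bool]_(U, D) | [forall u, row u S \in ~: Bad R D w j0]].
have cG : #|Good| = ((4 ^ D - b) ^ U)%N.
  by rewrite /Good card_rows (cardsCs (~: Bad R D w j0)) setCK Nr.
have hE : (#|E| <= 4 ^ (U * D) - (4 ^ D - b) ^ U)%N.
  rewrite -All -cG.
  have -> : (#|{: 'M[bool * bool]_(U, D)}| - #|Good| = #|~: Good|)%N.
    by rewrite (cardsCs (~: Good)) setCK.
  apply: subset_leq_card; apply/subsetP => S; rewrite !inE => /(ecl_bad R U D w j0 wj0 S) [u hu].
  by apply/negP => /forallP /(_ u); rewrite in_setC hu.
set N := (4 ^ D)%N.
have expUD : (4 ^ (U * D) = N ^ U)%N by rewrite mulnC expnM.
rewrite expUD in hE *.
have N0 : (0 < N)%N by rewrite expn_gt0.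
have Np : (0 : R) < N%:R by rewrite ltr0n.
apply: (@le_trans _ _ (1 - ((N - b)%:R / N%:R) ^+ U)).
  rewrite ler_pdivrMr; last by rewrite ltr0n expn_gt0 N0.
  rewrite expr_div_n mulrBl mul1r natrX divfK; last by rewrite expf_neq0 // gt_eqF.
  rewrite -!natrX -natrB ?ler_nat //.
  by rewrite leq_exp2r // leq_subr.
rewrite lerD2l lerN2.
have e2 : ((2 ^ k)%:R - 1 = (2 ^ k - 1)%:R :> R) by rewrite natrB ?expn_gt0 // mulr1n.
rewrite e2.
have q1 : (2 ^ k - 1)%:R / (4 ^ (k - 1))%:R <= (1 : R).
  rewrite ler_pdivrMr ?ltr0n ?expn_gt0 // mul1r ler_nat.
  exact: nat_q k k1.
apply: lerXn2r.
- by rewrite nnegrE subr_ge0.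
- by rewrite nnegrE divr_ge0 ?ler0n.
rewrite [(N - b)%:R]natrB // mulrBl divff ?gt_eqF // lerD2l lerN2.
rewrite ler_pdivrMr // mulrAC ler_pdivlMr ?ltr0n ?expn_gt0 //.
by rewrite -!natrM ler_nat.
Qed.
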